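(* For every $N\ge 1$, $$\mathbb{E}[\mathcal{R}_2(N)]=H_{N-1},\qquad \mathbb{E}[\mathcal{R}_2(N)^2]=H_{N-1}^2+H_{N-1}-H_{N-1}^{(2)},\qquad \operatorname{Var}[\mathcal{R}_2(N)]=H_{N-1}-H_{N-1}^{(2)},$$ where $H_n=\sum_{i=1}^n 1/i$ and $H_n^{(2)}=\sum_{i=1}^n 1/i^2$ (with $H_0=H_0^{(2)}=0$).
   Context: A random recursive hypergraph (RRH) is the random hypergraph process defined as follows. At size $N=1$ it has vertex set $\{v_1\}$ and edge set $\{\{v_1\}\}$. Given the hypergraph of size $N$ (vertices $v_1,\dots,v_N$, exactly $N$ edges), one chooses an existing edge $e$ uniformly at random, independently of the past, and adds a new vertex $v_{N+1}$ together with the new edge $e\cup\{v_{N+1}\}$. The rank of a vertex $v$ is $\min\{|e| : v\in e\}$. $\mathcal{R}_k(N)$ denotes the number of vertices of rank $k$ in the RRH of size $N$ (equivalently, the number of edges of size $k$). *)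

(* Defs.v *)
From mathcomp Require Import all_boot all_order all_algebra.
Set Implicit Arguments. Unset Strict Implicit. Unset Printing Implicit Defensive.
Import Order.TTheory GRing.Theory Num.Theory.
Local Open Scope ring_scope.

(* A hypergraph of size N: vertices v_1..v_N are encoded as 0..N-1,
   edges are listed (in order of creation) as sequences of vertices. *)
Definition hgraph := seq (seq nat).

Definition rrh_init : hgraph := [:: [:: 0%N]].

(* One step: choose edge number c, add new vertex (numbered size E, as there
   are exactly as many vertices as edges) and new edge e_c ∪ {new vertex}. *)
Definition rrh_step (E : hgraph) (c : nat) : hgraph :=
  rcons E (rcons (nth [::] E c) (size E)).

Fixpoint rrh_expect (R : fieldType) (n : nat) (E : hgraph) (f : hgraph -> R) : R :=
  match n with
  | 0%N => f E
  | n'.+1 => (size E)%:R^-1 * \sum_(c < size E) rrh_expect n' (rrh_step E c) f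
  end.

Definition E_RRH (R : fieldType) (N : nat) (f : hgraph -> R) : R :=
  rrh_expect N.-1 rrh_init f.

Definition Var_RRH (R : fieldType) (N : nat) (f : hgraph -> R) : R :=
  E_RRH N (fun E => (f E - E_RRH N f) ^+ 2).

Definition vrank (E : hgraph) (v : nat) : nat :=
  foldr minn (size (flatten E)).+1 [seq size e | e <- E & v \in e].

Definition Rk (k : nat) (E : hgraph) : nat :=
  count (fun v => vrank E v == k) (iota 0 (size E)).

Definition Hn (R : fieldType) (n : nat) : R := \sum_(1 <= i < n.+1) (i%:R)^-1.
Definition Hn2 (R : fieldType) (n : nat) : R := \sum_(1 <= i < n.+1) (i%:R ^+ 2)^-1.

(* Main.v *)
Require Import Defs.
From mathcomp Require Import all_boot all_order all_algebra.
From mathcomp Require Import ring lra.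
Import GRing.Theory Num.Theory.
Local Open Scope ring_scope.

Definition rinv (E : hgraph) := [/\ (0 < size E)%N,
  forall e, e \in E -> forall x, x \in e -> (x < size E)%N,
  forall v, (v < size E)%N -> v \in nth [::] E v /\
     (forall e, e \in E -> v \in e -> (size (nth [::] E v) <= size e)%N)
  & forall c, (c < size E)%N -> (size (nth [::] E c) == 1%N) = (c == 0%N)].

Lemma rinv_init : rinv rrh_init.
Proof.
split => //.
- by move=> e; rewrite inE => /eqP -> x; rewrite inE => /eqP ->.
- case=> // _; split => // e; by rewrite inE => /eqP ->.
- by case.
Qed.

Lemma rinv_step E c : rinv E -> (c < size E)%N -> rinv (rrh_step E c).
Proof.
case=> H0 H1 H2 H3 Hc; rewrite /rrh_step.
have Hcin : c \in nth [::] E c by case: (H2 c Hc).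
have Hecin : nth [::] E c \in E by apply: mem_nth.
split; rewrite size_rcons //.
- move=> e; rewrite mem_rcons inE => /orP [/eqP -> | He] x.
    rewrite mem_rcons inE => /orP [/eqP -> // | Hx].
    by apply: ltnW; rewrite ltnS; apply: H1 Hecin x Hx.
  by move=> Hx; apply: ltnW; rewrite ltnS; apply: H1 He x Hx.
- move=> v; rewrite ltnS leq_eqVlt => /orP [/eqP -> | Hv].
    rewrite nth_rcons ltnn eqxx mem_rcons in_cons eqxx; split => // e.
    rewrite mem_rcons inE => /orP [/eqP -> // | He] Hm.
    by have := H1 e He _ Hm; rewrite ltnn.
  rewrite nth_rcons Hv; case: (H2 v Hv) => Hv1 Hv2; split => // e.
  rewrite mem_rcons inE => /orP [/eqP -> | He] Hve; last by apply: Hv2.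
  move: Hve; rewrite mem_rcons inE => /orP [/eqP Hvm | Hve].
    by move: Hv; rewrite Hvm ltnn.
  rewrite size_rcons; apply: leq_trans (Hv2 _ Hecin Hve) _; exact: leqnSn.
- move=> c'; rewrite ltnS leq_eqVlt => /orP [/eqP -> | Hc'].
    rewrite nth_rcons ltnn eqxx size_rcons eqSS.
    have -> : (size (nth [::] E c) == 0%N) = false.
      by apply/negbTE; apply/eqP => Hs; move: Hcin; rewrite (size0nil Hs).
    by case: (size E) H0.
  by rewrite nth_rcons Hc'; apply: H3.
Qed.

Lemma foldr_minn_le (s : seq nat) D y : y \in s -> (foldr minn D s <= y)%N.
Proof.
elim: s => // a s IH; rewrite inE => /orP [/eqP -> | Hy] /=; first exact: geq_minl.
exact: leq_trans (geq_minr _ _) (IH Hy).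
Qed.

Lemma foldr_minn_ge (s : seq nat) D x : (forall y, y \in s -> (x <= y)%N) ->
  (x <= D)%N -> (x <= foldr minn D s)%N.
Proof.
elim: s => //= a s IH Hy HD; rewrite leq_min Hy ?inE ?eqxx // IH // => y Hy'.
by apply: Hy; rewrite inE Hy' orbT.
Qed.

Lemma size_nth_flatten (E : hgraph) i : (size (nth [::] E i) <= size (flatten E))%N.
Proof.
elim: E i => [|e E IH] [|i] //=; rewrite size_cat ?leq_addr //.
exact: leq_trans (IH i) (leq_addl _ _).
Qed.

Lemma vrankE E v : rinv E -> (v < size E)%N -> vrank E v = size (nth [::] E v).
Proof.
case=> _ _ H2 _ Hv; case: (H2 v Hv) => Hv1 Hv2; rewrite /vrank.
apply/eqP; rewrite eqn_leq; apply/andP; split.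
  apply: foldr_minn_le; apply/mapP; exists (nth [::] E v) => //.
  by rewrite mem_filter Hv1 mem_nth.
apply: foldr_minn_ge; last exact: leq_trans (size_nth_flatten E v) (leqnSn _).
move=> y /mapP [e]; rewrite mem_filter => /andP [Hve He] ->; exact: Hv2.
Qed.

Lemma RkE E : rinv E ->
  Rk 2 E = count (fun v => size (nth [::] E v) == 2%N) (iota 0 (size E)).
Proof.
move=> HE; rewrite /Rk; apply: eq_in_count => v; rewrite mem_iota add0n => Hv.
by rewrite vrankE.
Qed.

Lemma Rk_step E c : rinv E -> (c < size E)%N ->
  Rk 2 (rrh_step E c) = (Rk 2 E + (c == 0%N))%N.
Proof.
move=> HE Hc; rewrite (RkE _ (@rinv_step E c HE Hc)) (RkE _ HE) /rrh_step size_rcons.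
rewrite -[(size E).+1]addn1 iotaD count_cat add0n /= nth_rcons ltnn eqxx size_rcons eqSS.
case: HE => _ _ _ H3; rewrite H3 // addn0; congr addn.
apply: eq_in_count => v; rewrite mem_iota /= => Hv.
by rewrite nth_rcons Hv.
Qed.

Lemma size_step E c : size (rrh_step E c) = (size E).+1.
Proof. exact: size_rcons. Qed.

Definition F (R : fieldType) m n : R := \sum_(m <= i < m + n) (i%:R)^-1.
Definition F2 (R : fieldType) m n : R := \sum_(m <= i < m + n) (i%:R ^+ 2)^-1.

Lemma F0 (R : fieldType) m : F R m 0 = 0.
Proof. by rewrite /F addn0 big_geq. Qed.
Lemma F20 (R : fieldType) m : F2 R m 0 = 0.
Proof. by rewrite /F2 addn0 big_geq. Qed.
Lemma FS (R : fieldType) m n : F R m n.+1 = (m%:R)^-1 + F R m.+1 n.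
Proof. by rewrite /F big_ltn ?addnS ?addSn // ltnS leq_addr. Qed.
Lemma F2S (R : fieldType) m n : F2 R m n.+1 = (m%:R ^+ 2)^-1 + F2 R m.+1 n.
Proof. by rewrite /F2 big_ltn ?addnS ?addSn // ltnS leq_addr. Qed.

Lemma sum_split (R : fieldType) (E : hgraph) (g : nat -> R) : rinv E ->
  \sum_(c < size E) g (Rk 2 (rrh_step E c)) =
  g (Rk 2 E).+1 + g (Rk 2 E) *+ (size E).-1.
Proof.
move=> HE; have Hpos : (0 < size E)%N by case: HE.
have Hr := @Rk_step E _ HE.
transitivity (\sum_(c < size E) g (Rk 2 E + (nat_of_ord c == 0%N))%N).
  by apply: eq_bigr => c _; rewrite Hr.
move: Hpos; case: (size E) => // m _.
rewrite big_ord_recl /= addn1; congr (_ + _).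
under eq_bigr => i _ do rewrite /= /bump /= addn0.
by rewrite sumr_const card_ord.
Qed.

Lemma exp1 (R : realFieldType) n : forall E, rinv E ->
  rrh_expect n E (fun E => (Rk 2 E)%:R : R) = (Rk 2 E)%:R + F R (size E) n.
Proof.
elim: n => [|n IH] E HE /=; first by rewrite F0 addr0.
have Hpos : (0 < size E)%N by case: HE.
transitivity ((size E)%:R^-1 * \sum_(c < size E)
   (fun k => k%:R + F R (size E).+1 n) (Rk 2 (rrh_step E c))).
  congr (_ * _); apply: eq_bigr => c _.
  by rewrite IH ?size_step //; apply: rinv_step.
rewrite (@sum_split R E (fun k : nat => k%:R + F R (size E).+1 n)) // FS.
move: Hpos; case: (size E) => // m _ /=.
rewrite -mulr_natr -!natr1.
set r := (Rk 2 E)%:R; set S := F R m.+2 n; set x : R := m%:R.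
have hx : x + 1 != 0 by rewrite lt0r_neq0 // ltr_wpDl // ler0n.
field; exact: hx.
Qed.

Lemma exp2 (R : realFieldType) (a : R) n : forall E, rinv E ->
  rrh_expect n E (fun E => ((Rk 2 E)%:R - a) ^+ 2) =
  ((Rk 2 E)%:R + F R (size E) n - a) ^+ 2 + F R (size E) n - F2 R (size E) n.
Proof.
elim: n => [|n IH] E HE /=; first by rewrite F0 F20 !addr0 subr0.
have Hpos : (0 < size E)%N by case: HE.
transitivity ((size E)%:R^-1 * \sum_(c < size E)
   (fun k => (k%:R + F R (size E).+1 n - a) ^+ 2 + F R (size E).+1 n
      - F2 R (size E).+1 n) (Rk 2 (rrh_step E c))).
  congr (_ * _); apply: eq_bigr => c _.
  by rewrite IH ?size_step //; apply: rinv_step.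
rewrite (@sum_split R E (fun k : nat => (k%:R + F R (size E).+1 n - a) ^+ 2 + F R (size E).+1 n
      - F2 R (size E).+1 n)) // FS F2S.
move: Hpos; case: (size E) => // m _ /=.
rewrite -mulr_natr -!natr1.
set r := (Rk 2 E)%:R; set S := F R m.+2 n; set S2 := F2 R m.+2 n;
set x : R := m%:R.
have hx : x + 1 != 0 by rewrite lt0r_neq0 // ltr_wpDl // ler0n.
field; exact: hx.
Qed.

Lemma F_Hn (R : fieldType) N : (1 <= N)%N -> F R 1 N.-1 = Hn R N.-1.
Proof. by case: N => // N _; rewrite /F /Hn add1n. Qed.
Lemma F2_Hn2 (R : fieldType) N : (1 <= N)%N -> F2 R 1 N.-1 = Hn2 R N.-1.
Proof. by case: N => // N _; rewrite /F2 /Hn2 add1n. Qed.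

Lemma eq_rrh (R : fieldType) n E (f g : hgraph -> R) : f =1 g ->
  rrh_expect n E f = rrh_expect n E g.
Proof.
move=> fg; elim: n E => [|n IH] E /=; first exact: fg.
by congr (_ * _); apply: eq_bigr => c _; apply: IH.
Qed.

Lemma Rk_init : Rk 2 rrh_init = 0%N.
Proof. by []. Qed.

Theorem mainTheorem8 (R : realFieldType) (N : nat) : (1 <= N)%N ->
  [/\ E_RRH N (fun E => (Rk 2 E)%:R) = Hn R N.-1,
      E_RRH N (fun E => ((Rk 2 E)%:R) ^+ 2) = Hn R N.-1 ^+ 2 + Hn R N.-1 - Hn2 R N.-1
    & Var_RRH N (fun E => (Rk 2 E)%:R) = Hn R N.-1 - Hn2 R N.-1].
Proof.
move=> HN.
have h1 : E_RRH N (fun E => (Rk 2 E)%:R) = Hn R N.-1.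
  rewrite /E_RRH exp1; last exact: rinv_init.
  by rewrite (_ : Rk 2 rrh_init = 0%N) // add0r F_Hn.
split => //.
- have := @exp2 R 0 N.-1 _ rinv_init.
  rewrite (_ : Rk 2 rrh_init = 0%N) // add0r !subr0 F_Hn // F2_Hn2 // => <-.
  by rewrite /E_RRH; apply: eq_rrh => E; rewrite subr0.
- rewrite /Var_RRH h1 /E_RRH exp2; last exact: rinv_init.
  rewrite (_ : Rk 2 rrh_init = 0%N) // add0r F_Hn // F2_Hn2 //.
  by rewrite subrr expr0n /= add0r.
Qed.
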